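(* Let $G\in\mathcal{G}(\widehat{C}_6,\widehat{C}_7)$, let $x\in V(G)$, let $A$ be a connected component of $G[N_2(x)]$ not belonging to $A^*$, and let $a,b$ be adjacent vertices of $A$ with $|N(a)\cap D|=|N(b)\cap D|=2$. Then there is no independent set $S\subseteq N_2(x)\setminus V(A^* )$ with $D\subseteq N(S)$.
   Context: All graphs are finite, simple and undirected. $\mathcal{G}(\widehat{C}_6,\widehat{C}_7)$ is the family of graphs with no subgraph (not necessarily induced) isomorphic to $C_6$ or $C_7$. For a vertex set $S$, $N_i(S)$ is the set of vertices at distance exactly $i$ from $S$, $N(S)=N_1(S)$, $N(v)=N(\{v\})$, $N_2(v)=N_2(\{v\})$ (all in $G$). $A^*$ is the set of connected components $A$ of $G[N_2(x)]$ for which there exists a vertex $a\in V(A)$ with $N(x)\cap N(a)=N(x)\cap N(V(A))$; $V(A^* )$ is the union of their vertex sets; and $D=N(x)\setminus N(V(A^* ))$. *)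

(* Defs.v *)
From mathcomp Require Import all_boot.
Set Implicit Arguments. Unset Strict Implicit. Unset Printing Implicit Defensive.

Section Graph.
Variables (T : finType) (e : rel T).

Definition simple_graph : Prop := symmetric e /\ irreflexive e.

(* G contains a (not necessarily induced) subgraph isomorphic to C_k:
   k distinct vertices v_0,...,v_{k-1} with v_i ~ v_{i+1 mod k}. *)
Definition has_Ck (k : nat) : Prop :=
  exists s : seq T, [/\ size s = k, uniq s & cycle e s].

Definition nbr (v : T) : {set T} := [set u | e v u].

Definition nbrS (S : {set T}) : {set T} :=
  [set u | (u \notin S) && [exists s in S, e s u]].

Definition N2 (x : T) : {set T} :=
  [set u | [&& u != x, ~~ e x u & [exists w, e x w && e w u]]].

Definition induced_rel (W : {set T}) : rel T :=
  fun u v => [&& e u v, u \in W & v \in W].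

Definition is_component (W A : {set T}) : bool :=
  [exists a in W, A == [set y | connect (induced_rel W) a y]].

Definition in_Astar (x : T) (A : {set T}) : bool :=
  is_component (N2 x) A &&
  [exists a in A, nbr x :&: nbr a == nbr x :&: nbrS A].

Definition VAstar (x : T) : {set T} :=
  [set y | [exists A : {set T}, in_Astar x A && (y \in A)]].

Definition Dset (x : T) : {set T} := nbr x :\: nbrS (VAstar x).

Definition independent (S : {set T}) : Prop :=
  {in S &, forall u v, ~~ e u v}.

End Graph.

(* Main.v *)
Require Import Defs.
From mathcomp Require Import all_boot.
Set Implicit Arguments. Unset Strict Implicit. Unset Printing Implicit Defensive.

Lemma N2P (T : finType) (e : rel T) x v :
  v \in N2 e x -> [/\ v != x, ~~ e x v & exists w, e x w && e w v].
Proof. by rewrite inE => /and3P[? ? /existsP ?]. Qed.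

Lemma N2nb (T : finType) (e : rel T) x v : symmetric e ->
  v \in N2 e x -> exists w, e x w /\ e v w.
Proof.
move=> Hs /N2P[_ _ [w /andP[h1 h2]]]; exists w; split=> //; by rewrite Hs.
Qed.

Lemma nN1N2 (T : finType) (e : rel T) x u v : e x u -> v \in N2 e x -> u != v.
Proof. move=> h /N2P[_ h' _]; apply/eqP => huv; subst; by rewrite h in h'. Qed.

Lemma nxN2 (T : finType) (e : rel T) x v : v \in N2 e x -> x != v.
Proof. by move=> /N2P[h _ _]; rewrite eq_sym. Qed.

Lemma nadj (T : finType) (e : rel T) u v : irreflexive e -> e u v -> u != v.
Proof. move=> Hi h; apply/eqP => E; subst; by rewrite Hi in h. Qed.

Ltac ed Hs := first [done | assumption | rewrite Hs; assumption].
Ltac nq Hs Hi X := first [ done | assumption | rewrite eq_sym; assumption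
  | (apply: (nadj Hi); ed Hs)
  | (apply: (nN1N2 (x:=X)); eassumption)
  | (rewrite eq_sym; apply: (nN1N2 (x:=X)); eassumption)
  | (apply: (nxN2 (x:=X)); eassumption)
  | (rewrite eq_sym; apply: (nxN2 (x:=X)); eassumption) ].
Ltac mkcyc Hs Hi X L := exists L; split; [reflexivity
  | rewrite /= !inE !negb_or; repeat (apply/andP; split); nq Hs Hi X
  | rewrite /=; repeat (apply/andP; split); ed Hs].

Lemma test (T : finType) (e : rel T) (Hs : symmetric e) (Hi : irreflexive e) x a b p q
  (Ha : a \in N2 e x) (Hb : b \in N2 e x) (Hab : e a b) (Hap : e a p) (Hbq : e b q)
  (Hxp : e x p) (Hxq : e x q) (pq : p != q) : has_Ck e 5.
Proof. mkcyc Hs Hi x [:: x; p; a; b; q]. Qed.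

Lemma conn_ind (T : finType) (R : rel T) (P : T -> Prop) u v :
  P u -> (forall y z, P y -> R y z -> P z) -> connect R u v -> P v.
Proof.
move=> Pu step /connectP [pth Hp ->].
elim: pth u Pu Hp => [|y pth IH] u Pu //= /andP[Ruy Hp].
apply: (IH y) => //; exact: step Pu Ruy.
Qed.

Lemma crossing (T : finType) (R : rel T) (P : pred T) u v :
  connect R u v -> P u -> ~~ P v ->
  exists y z, [/\ connect R u y, P y, R y z & ~~ P z].
Proof.
move=> /connectP [pth Hp ->].
elim: pth u Hp => [|y pth IH] u /=; first by move=> _ ->.
move=> /andP[Ruy Hp] Pu Plast.
case Py: (P y).
- have [y' [z [c1 Py' R' nz]]] := IH y Hp Py Plast.
  exists y', z; split=> //; exact: connect_trans (connect1 Ruy) c1.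
- by exists u, y; split => //; rewrite ?Py // connect0.
Qed.

Lemma conn_N2 (T : finType) (e : rel T) x u v :
  u \in N2 e x -> connect (induced_rel e (N2 e x)) u v -> v \in N2 e x.
Proof.
move=> Hu; apply: (conn_ind (P := fun y => y \in N2 e x)) => // y z _.
by case/and3P.
Qed.

Lemma K1 (T : finType) (e : rel T) (Hs : symmetric e) (Hi : irreflexive e)
  (H6 : ~ has_Ck e 6) x a b u c v
  (Ha : a \in N2 e x) (Hb : b \in N2 e x) (Hab : e a b)
  (Hau : e a u) (Hac : e a c) (Hbc : e b c) (Hbv : e b v)
  (Hxu : e x u) (Hxc : e x c) (Hxv : e x v)
  (uc : u != c) (uv : u != v) (cv : c != v) : False.
Proof. apply: H6; mkcyc Hs Hi x [:: x; u; a; c; b; v]. Qed.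

Definition cfg (T : finType) (e : rel T) x a b p q r s : Prop :=
  [/\ a \in N2 e x /\ b \in N2 e x, e a b,
      [/\ e a p, e a q, e b r & e b s],
      [/\ e x p, e x q, e x r & e x s]
    & [/\ p != q, p != r, p != s, q != r & (q != s) && (r != s)]].

Lemma cfg_swap (T : finType) (e : rel T) x a b p q r s :
  cfg e x a b p q r s -> cfg e x a b p q s r.
Proof.
case=> H1 H2 [h1 h2 h3 h4] [k1 k2 k3 k4] [d1 d2 d3 d4 /andP[d5 d6]].
split=> //; split=> //; by rewrite d4 eq_sym d6.
Qed.

Lemma F1 (T : finType) (e : rel T) (Hs : symmetric e) (Hi : irreflexive e)
  (H6 : ~ has_Ck e 6) (H7 : ~ has_Ck e 7) x a b p q r s :
  cfg e x a b p q r s ->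
  forall t, t \in N2 e x -> t != a -> t != b -> e t r ->
  [/\ ~~ e t a, ~~ e t b & forall w, e x w -> e t w -> w = r].
Proof.
move=> [[Ha Hb] Hab [Hap Haq Hbr Hbs] [Hxp Hxq Hxr Hxs] [pq pr ps qr /andP[qs rs]]].
move=> t Ht ta tb Htr; split.
- apply/negP => Hta; apply: H6; mkcyc Hs Hi x [:: x; r; t; a; b; s].
- apply/negP => Htb; apply: H6; mkcyc Hs Hi x [:: x; r; t; b; a; p].
- move=> w Hxw Htw; apply/eqP; apply/negPn/negP => wr.
  case: (eqVneq w p) => [E|wp].
  + subst w; apply: H6; mkcyc Hs Hi x [:: x; q; a; p; t; r].
  + apply: H7; mkcyc Hs Hi x [:: x; w; t; r; b; a; p].
Qed.

Definition Inv0 (T : finType) (e : rel T) x a b r s y :=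
  [/\ y \in N2 e x, y != a, y != b & e y r || e y s].

Lemma col_excl (T : finType) (e : rel T) (Hs : symmetric e) (Hi : irreflexive e)
  (H6 : ~ has_Ck e 6) (H7 : ~ has_Ck e 7) x a b p q r s :
  cfg e x a b p q r s -> forall y, Inv0 e x a b r s y -> e y r -> ~~ e y s.
Proof.
move=> C y [Hy ya yb _] Hyr; apply/negP => Hys.
have [_ _ H] := F1 Hs Hi H6 H7 C Hy ya yb Hyr.
have E := H s _ Hys.
case: C => _ _ _ [_ _ _ Hxs] [_ _ _ _ /andP[_ rs]].
by move: rs; rewrite E // eqxx.
Qed.

Lemma step0 (T : finType) (e : rel T) (Hs : symmetric e) (Hi : irreflexive e)
  (H6 : ~ has_Ck e 6) (H7 : ~ has_Ck e 7) x a b p q r s :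
  cfg e x a b p q r s -> forall y z, Inv0 e x a b r s y ->
  induced_rel e (N2 e x) y z -> Inv0 e x a b r s z.
Proof.
move=> C y z [Hy ya yb Hyrs] /and3P[Hyz _ Hz].
have [nya nyb] : ~~ e y a /\ ~~ e y b.
  case/orP: Hyrs => H.
  - by have [? ? _] := F1 Hs Hi H6 H7 C Hy ya yb H.
  - by have [? ? _] := F1 Hs Hi H6 H7 (cfg_swap C) Hy ya yb H.
have za : z != a by apply/eqP => E; subst; rewrite Hyz in nya.
have zb : z != b by apply/eqP => E; subst; rewrite Hyz in nyb.
split=> //.
have [w [Hxw Hzw]] := N2nb Hs Hz.
case: (eqVneq w r) => [E|wr]; first by subst; rewrite Hzw.
case: (eqVneq w s) => [E|ws]; first by subst; rewrite Hzw orbT.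
exfalso.
move: C => [[Ha Hb] Hab [Hap Haq Hbr Hbs] [Hxp Hxq Hxr Hxs] [pq pr ps qr /andP[qs rs]]].
have yz : y != z by apply: (nadj Hi).
case/orP: Hyrs => H.
- apply: H7; mkcyc Hs Hi x [:: x; w; z; y; r; b; s].
- apply: H7; mkcyc Hs Hi x [:: x; w; z; y; s; b; r].
Qed.

Lemma L2 (T : finType) (e : rel T) (Hs : symmetric e) (Hi : irreflexive e)
  (H6 : ~ has_Ck e 6) x a b p q r s :
  cfg e x a b p q r s -> forall y m z, y \in N2 e x -> m \in N2 e x -> z \in N2 e x ->
  y != z -> e y r -> e y m -> e m z -> e z s -> False.
Proof.
move=> [[Ha Hb] Hab [Hap Haq Hbr Hbs] [Hxp Hxq Hxr Hxs] [pq pr ps qr /andP[qs rs]]].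
move=> y m z Hy Hm Hz yz Hyr Hym Hmz Hzs.
apply: H6; mkcyc Hs Hi x [:: r; y; m; z; s; x].
Qed.

Lemma L3 (T : finType) (e : rel T) (Hs : symmetric e) (Hi : irreflexive e)
  (H7 : ~ has_Ck e 7) x a b p q r s :
  cfg e x a b p q r s -> forall y m1 m2 z, y \in N2 e x -> m1 \in N2 e x ->
  m2 \in N2 e x -> z \in N2 e x ->
  y != z -> y != m2 -> m1 != z -> e y r -> e y m1 -> e m1 m2 -> e m2 z -> e z s -> False.
Proof.
move=> [[Ha Hb] Hab [Hap Haq Hbr Hbs] [Hxp Hxq Hxr Hxs] [pq pr ps qr /andP[qs rs]]].
move=> y m1 m2 z Hy Hm1 Hm2 Hz yz ym2 m1z Hyr H1 H2 H3 Hzs.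
apply: H7; mkcyc Hs Hi x [:: r; y; m1; m2; z; s; x].
Qed.

Lemma PL (T : finType) (e : rel T) (Hs : symmetric e) (Hi : irreflexive e)
  (H6 : ~ has_Ck e 6) (H7 : ~ has_Ck e 7) x a b p q r s :
  cfg e x a b p q r s -> forall rest y0 y1, uniq (y0 :: y1 :: rest) ->
  path (induced_rel e (N2 e x)) y0 (y1 :: rest) ->
  Inv0 e x a b r s y0 -> e y0 r -> e y1 r -> e (last y1 rest) r.
Proof.
move=> C; elim=> [|y2 rest IH] y0 y1 //= Hu /and3P[R01 R12 Hp] I0 H0r H1r.
have I1 := step0 Hs Hi H6 H7 C I0 R01.
have I2 := step0 Hs Hi H6 H7 C I1 R12.
case: (boolP (e y2 r)) => H2r.
- apply: (IH y1) => //=; last by rewrite R12.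
  by move: Hu => /andP[_].
- exfalso.
  have H2s : e y2 s by case: I2 => _ _ _; rewrite (negbTE H2r).
  have y02 : y0 != y2.
    by move: Hu; rewrite /= !inE negb_or => /andP[/andP[_]]; rewrite negb_or => /andP[].
  case: I0 => Hy0 _ _ _; case: I1 => Hy1 _ _ _; case: I2 => Hy2 _ _ _.
  move: R01 R12 => /and3P[e01 _ _] /and3P[e12 _ _].
  exact: (L2 Hs Hi H6 C Hy0 Hy1 Hy2 y02 H0r e01 e12 H2s).
Qed.

Lemma compS (T : finType) (e : rel T) (Hs : symmetric e) (Hi : irreflexive e)
  (H6 : ~ has_Ck e 6) (H7 : ~ has_Ck e 7) x a b p q r s :
  cfg e x a b p q r s -> forall t, t \in N2 e x -> t != a -> t != b -> e t r ->
  t \notin VAstar e x ->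
  exists2 v, connect (induced_rel e (N2 e x)) t v & e v s.
Proof.
move=> C t Ht ta tb Htr HtV.
have It : Inv0 e x a b r s t by split=> //; rewrite Htr.
have Inv : forall y, connect (induced_rel e (N2 e x)) t y -> Inv0 e x a b r s y.
  move=> y; apply: (conn_ind (P := Inv0 e x a b r s)) => //.
  by move=> y0 z0; apply: (step0 Hs Hi H6 H7 C).
case: (boolP [exists v, connect (induced_rel e (N2 e x)) t v && e v s]).
  by case/existsP => v /andP[? ?]; exists v.
move=> Hno; exfalso; move/negP: HtV; apply.
rewrite inE; apply/existsP; exists [set y | connect (induced_rel e (N2 e x)) t y].
rewrite inE connect0 andbT; apply/andP; split.
  by apply/existsP; exists t; rewrite Ht eqxx.
apply/existsP; exists t; rewrite inE connect0 /=.
apply/eqP/setP => w; rewrite !inE.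
apply/idP/idP.
- move=> /andP[Hxw Htw]; rewrite Hxw /=; apply/andP; split.
  + apply/negP => Hc; have [Hw _ _ _] := Inv w Hc.
    by move: (nN1N2 Hxw Hw); rewrite eqxx.
  + by apply/existsP; exists t; rewrite inE connect0.
- move=> /andP[Hxw /andP[_ /existsP[y /andP[Cy Hyw]]]].
  rewrite inE in Cy; rewrite Hxw /=.
  have [Hy ya yb Hyrs] := Inv y Cy.
  case/orP: Hyrs => Hyr.
  + have [_ _ H] := F1 Hs Hi H6 H7 C Hy ya yb Hyr.
    by rewrite (H w Hxw Hyw).
  + by move: Hno; rewrite negb_exists => /forallP /(_ y); rewrite Cy Hyr.
Qed.

Lemma Inv0_swap (T : finType) (e : rel T) x a b r s y :
  Inv0 e x a b r s y -> Inv0 e x a b s r y.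
Proof. by case=> ? ? ? H; split=> //; rewrite orbC. Qed.

Lemma induced_sym (T : finType) (e : rel T) (W : {set T}) :
  symmetric e -> symmetric (induced_rel e W).
Proof.
move=> Hs u v; rewrite /induced_rel Hs.
by case: (u \in W); case: (v \in W); rewrite ?andbF.
Qed.

Lemma K0 (T : finType) (e : rel T) (Hs : symmetric e) (Hi : irreflexive e)
  (H6 : ~ has_Ck e 6) (H7 : ~ has_Ck e 7) x a b p q r s :
  cfg e x a b p q r s -> forall S : {set T},
  S \subset N2 e x :\: VAstar e x -> independent e S ->
  r \in nbrS e S -> s \in nbrS e S -> b \notin S -> ~~ e a r -> ~~ e a s -> False.
Proof.
move=> C S HS Hind Hr Hs' bS nar nas.
set R := induced_rel e (N2 e x).
have InvC : forall u y, Inv0 e x a b r s u -> connect R u y -> Inv0 e x a b r s y.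
  move=> u y Iu; apply: (conn_ind (P := Inv0 e x a b r s)) => //.
  by move=> y0 z0; apply: (step0 Hs Hi H6 H7 C).
have ex := col_excl Hs Hi H6 H7 C.
have ex' : forall y, Inv0 e x a b r s y -> e y s -> ~~ e y r.
  by move=> y Iy; apply: (col_excl Hs Hi H6 H7 (cfg_swap C)); apply: Inv0_swap.
have stp := step0 Hs Hi H6 H7 C.
move: Hr; rewrite inE => /andP[_ /existsP[t /andP[tS Htr]]].
move: Hs'; rewrite inE => /andP[_ /existsP[t' /andP[t'S Ht's]]].
move: (subsetP HS t tS); rewrite inE => /andP[tV Ht].
move: (subsetP HS t' t'S); rewrite inE => /andP[t'V Ht'].
have ta : t != a by apply/eqP => E; subst; rewrite Htr in nar.
have tb : t != b by apply/eqP => E; subst; rewrite tS in bS.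
have t'a : t' != a by apply/eqP => E; subst; rewrite Ht's in nas.
have t'b : t' != b by apply/eqP => E; subst; rewrite t'S in bS.
have It : Inv0 e x a b r s t by split=> //; rewrite Htr.
have It' : Inv0 e x a b r s t' by split=> //; rewrite Ht's orbT.
have ntt' : ~~ e t t' by apply: Hind.
case: (boolP (connect R t t')) => Hc.
- move/connectP: Hc => [pth Hp Et'].
  case: (shortenP Hp) Et' => p' Hp' Hu _ Et'.
  case: p' Hp' Hu Et' => [|y1 [|y2 rest]] /=.
  + move=> _ _ E; subst t'; by move: (ex t It Htr); rewrite Ht's.
  + move=> /andP[/and3P[Ht1 _ _] _] _ E; subst t'; by rewrite Ht1 in ntt'.
  + move=> /and3P[R01 R12 Hpr] Hu Et'.
    have I1 := stp _ _ It R01.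
    have I2 := stp _ _ I1 R12.
    case: (boolP (e y1 r)) => H1r.
    * have Hpath : path R t [:: y1, y2 & rest] by rewrite /= R01 R12 Hpr.
      have H := PL Hs Hi H6 H7 C Hu Hpath It Htr H1r.
      by move: H => /=; rewrite -Et' => H; move: (ex t' It' H); rewrite Ht's.
    * have H1s : e y1 s by case: I1 => _ _ _; rewrite (negbTE H1r).
      have t2 : t != y2.
        by move: Hu; apply: contraTneq => ->; rewrite /= !inE eqxx !orbT.
      have [Hy1 _ _ _] := I1; have [Hy2 _ _ _] := I2.
      move: (R01) (R12) => /and3P[e01 _ _] /and3P[e12 _ _].
      case: (boolP (e y2 s)) => H2s.
        exfalso; exact: (L2 Hs Hi H6 C Ht Hy1 Hy2 t2 Htr e01 e12 H2s).
      have H2r : e y2 r by case: I2 => _ _ _; rewrite (negbTE H2s) orbF.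
      case: rest Hpr Hu Et' => [|y3 rest] /=.
        by move=> _ _ E; subst t'; move: (ex y2 I2 H2r); rewrite Ht's.
      move=> /andP[R23 _] Hu _.
      have I3 := stp _ _ I2 R23.
      have [Hy3 _ _ _] := I3.
      move: (R23) => /and3P[e23 _ _].
      have y13 : y1 != y3.
        by move: Hu; apply: contraTneq => ->; rewrite /= !inE eqxx !orbT andbF.
      case: (boolP (e y3 r)) => H3r.
        exfalso; apply: (L2 Hs Hi H6 C Hy3 Hy2 Hy1 _ H3r _ _ H1s).
        - by rewrite eq_sym.
        - by rewrite Hs.
        - by rewrite Hs.
      have H3s : e y3 s by case: I3 => _ _ _; rewrite (negbTE H3r).
      have t3 : t != y3.
        by move: Hu; apply: contraTneq => ->; rewrite /= !inE eqxx !orbT.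
      exact: (L3 Hs Hi H7 C Ht Hy1 Hy2 Hy3 t3 t2 y13 Htr e01 e12 e23 H3s).
- have [v Ctv Hvs] := compS Hs Hi H6 H7 C Ht ta tb Htr tV.
  have [u' Ct'u Hur] := compS Hs Hi H6 H7 (cfg_swap C) Ht' t'a t'b Ht's t'V.
  have [y0 [z0 [Cty0 Hy0r R0 Hz0r]]] :=
    crossing (P := fun y => e y r) Ctv Htr (ex' v (InvC _ _ It Ctv) Hvs).
  have [y1 [z1 [Cty1 Hy1s R1 Hz1s]]] :=
    crossing (P := fun y => e y s) Ct'u Ht's (ex u' (InvC _ _ It' Ct'u) Hur).
  have Iy0 := InvC _ _ It Cty0; have Iz0 := stp _ _ Iy0 R0.
  have Iy1 := InvC _ _ It' Cty1; have Iz1 := stp _ _ Iy1 R1.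
  have Hz0s : e z0 s by case: Iz0 => _ _ _; rewrite (negbTE Hz0r).
  have Hz1r : e z1 r by case: Iz1 => _ _ _; rewrite (negbTE Hz1s) orbF.
  have Ctz0 : connect R t z0 := connect_trans Cty0 (connect1 R0).
  have Ctz1 : connect R t' z1 := connect_trans Cty1 (connect1 R1).
  have sep : forall u w, connect R t u -> connect R t' w -> u != w.
    move=> u w Cu Cw; apply/eqP => E; subst w; move/negP: Hc; apply.
    apply: connect_trans Cu _.
    by rewrite (sym_connect_sym (induced_sym _ Hs)).
  have d1 := sep _ _ Cty0 Cty1; have d2 := sep _ _ Cty0 Ctz1.
  have d3 := sep _ _ Ctz0 Cty1; have d4 := sep _ _ Ctz0 Ctz1.
  move: R0 R1 => /and3P[e0 _ _] /and3P[e1 _ _].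
  case: Iy0 => Hy0 _ _ _; case: Iz0 => Hz0 _ _ _.
  case: Iy1 => Hy1 _ _ _; case: Iz1 => Hz1 _ _ _.
  move: C => [[Ha Hb] Hab [Hap Haq Hbr Hbs] [Hxp Hxq Hxr Hxs] [pq pr ps qr /andP[qs rs]]].
  apply: H6; mkcyc Hs Hi x [:: r; y0; z0; s; y1; z1].
Qed.

Lemma step2 (T : finType) (e : rel T) (Hs : symmetric e) (Hi : irreflexive e)
  (H6 : ~ has_Ck e 6) (H7 : ~ has_Ck e 7) x a b p q
  (Ha : a \in N2 e x) (Hb : b \in N2 e x) (Hab : e a b)
  (Hap : e a p) (Haq : e a q) (Hbp : e b p) (Hbq : e b q)
  (Hxp : e x p) (Hxq : e x q) (pq : p != q) y z w
  (Hy : y \in N2 e x) (Hz : z \in N2 e x) (Hyz : e y z) (Hyp : e y p)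
  (Hxw : e x w) (Hzw : e z w) (wp : w != p) (wq : w != q) : False.
Proof.
have ab : a != b by apply: (nadj Hi).
have yz : y != z by apply: (nadj Hi).
case: (boolP ((y == a) && (z == b) || (y == b) && (z == a))).
  case/orP => /andP[/eqP E1 /eqP E2]; subst y z.
  - apply: H6; mkcyc Hs Hi x [:: x; w; b; q; a; p].
  - apply: H6; mkcyc Hs Hi x [:: x; w; a; q; b; p].
move=> Hn.
have [c [Hc cy cz Hcp Hcq]] : exists c, [/\ c \in N2 e x, c != y, c != z, e c p & e c q].
  case: (eqVneq a y) => [ay|ay]; last case: (eqVneq a z) => [az|az].
  - subst y; exists b; split=> //; first by rewrite eq_sym.
    by apply/eqP => E; subst z; move: Hn; rewrite !eqxx.
  - subst z; exists b; split=> //; last by rewrite eq_sym.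
    by apply/eqP => E; subst y; move: Hn; rewrite !eqxx orbT.
  - by exists a.
apply: H7; mkcyc Hs Hi x [:: x; w; z; y; p; c; q].
Qed.

Lemma K2 (T : finType) (e : rel T) (Hs : symmetric e) (Hi : irreflexive e)
  (H6 : ~ has_Ck e 6) (H7 : ~ has_Ck e 7) x (A : {set T})
  (HA : is_component e (N2 e x) A) (HnA : ~ in_Astar e x A) a b p q
  (aA : a \in A) (bA : b \in A) (Ha : a \in N2 e x) (Hb : b \in N2 e x) (Hab : e a b)
  (Hap : e a p) (Haq : e a q) (Hbp : e b p) (Hbq : e b q)
  (Hxp : e x p) (Hxq : e x q) (pq : p != q) : False.
Proof.
set R := induced_rel e (N2 e x).
have HA' := HA.
move/existsP: HA' => [a0 /andP[Ha0 /eqP EA]].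
have conn_a : forall y, y \in A -> connect R a y.
  move=> y; rewrite EA !inE => Cy; move: aA; rewrite EA inE => Ca.
  apply: connect_trans _ Cy.
  by rewrite (sym_connect_sym (induced_sym _ Hs)).
pose I2 y := y \in N2 e x /\ forall w, e x w -> e y w -> w = p \/ w = q.
have st := step2 Hs Hi H6 H7 Ha Hb Hab Hap Haq Hbp Hbq Hxp Hxq pq.
have qp : q != p by rewrite eq_sym.
have st' := step2 Hs Hi H6 H7 Ha Hb Hab Haq Hap Hbq Hbp Hxq Hxp qp.
have I2a : I2 a.
  split=> // w Hxw Haw.
  case: (eqVneq w p) => [->|wp]; first by left.
  case: (eqVneq w q) => [->|wq]; first by right.
  exfalso; apply: (st b a w Hb Ha _ Hbp Hxw Haw wp wq); by rewrite Hs.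
have I2step : forall y z, I2 y -> R y z -> I2 z.
  move=> y z [Hy Hyw] /and3P[Hyz _ Hz]; split=> // w Hxw Hzw.
  case: (eqVneq w p) => [->|wp]; first by left.
  case: (eqVneq w q) => [->|wq]; first by right.
  exfalso; have [w0 [Hxw0 Hyw0]] := N2nb Hs Hy.
  case: (Hyw w0 Hxw0 Hyw0) => E; subst w0.
  - exact: (st y z w Hy Hz Hyz Hyw0 Hxw Hzw wp wq).
  - exact: (st' y z w Hy Hz Hyz Hyw0 Hxw Hzw wq wp).
have IA : forall y, y \in A -> I2 y.
  move=> y yA; apply: (conn_ind (P := I2) I2a I2step); exact: conn_a.
apply: HnA; rewrite /in_Astar HA /=; apply/existsP; exists a; rewrite aA /=.
apply/eqP/setP => w; rewrite !inE; apply/idP/idP.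
- move=> /andP[Hxw Haw]; rewrite Hxw /=; apply/andP; split.
  + apply/negP => wA; have [Hw _] := IA w wA.
    by move: (nN1N2 Hxw Hw); rewrite eqxx.
  + by apply/existsP; exists a; rewrite aA.
- move=> /andP[Hxw /andP[_ /existsP[y /andP[yA Hyw]]]]; rewrite Hxw /=.
  have [_ H] := IA y yA; by case: (H w Hxw Hyw) => ->.
Qed.

Lemma pair_of (T : finType) (e : rel T) x a :
  #|nbr e a :&: Dset e x| = 2 ->
  exists p q, [/\ p != q, e a p, e a q, p \in Dset e x /\ q \in Dset e x
    & forall w, w \in Dset e x -> e a w -> w = p \/ w = q].
Proof.
move/eqP/cards2P => [p [q [pq E]]]; exists p, q.
have Hm : forall w, (w \in nbr e a :&: Dset e x) = (w \in [set p; q]) by rewrite E.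
have := Hm p; have := Hm q; rewrite !in_setI !in_set !inE !eqxx orbT /=.
move=> /andP[Haq HqD] /andP[Hap HpD]; split=> // w HwD Haw.
have := Hm w; rewrite in_setI in_set Haw HwD !inE /=.
by move/esym => /orP[/eqP|/eqP]; [left|right].
Qed.

Lemma DN1 (T : finType) (e : rel T) x w : w \in Dset e x -> e x w.
Proof. by rewrite !inE => /andP[_]. Qed.

Theorem corollary2p13 (T : finType) (e : rel T) :
  simple_graph e -> ~ has_Ck e 6 -> ~ has_Ck e 7 ->
  forall (x : T) (A : {set T}),
    is_component e (N2 e x) A -> ~ in_Astar e x A ->
  forall a b : T, a \in A -> b \in A -> e a b ->
    #|nbr e a :&: Dset e x| = 2 -> #|nbr e b :&: Dset e x| = 2 ->
  ~ (exists S : {set T},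
       [/\ S \subset N2 e x :\: VAstar e x, independent e S &
           Dset e x \subset nbrS e S]).
Proof.
move=> [Hs Hi] H6 H7 x A HA HnA a b aA bA Hab Hca Hcb [S [HS Hind HD]].
have HA' := HA; move/existsP: HA' => [a0 /andP[Ha0 /eqP EA]].
have Ha : a \in N2 e x by move: aA; rewrite EA inE; apply: conn_N2.
have Hb : b \in N2 e x by move: bA; rewrite EA inE; apply: conn_N2.
have [p [q [pq Hap Haq [HpD HqD] aD]]] := pair_of Hca.
have [r [s [rs Hbr Hbs [HrD HsD] bD]]] := pair_of Hcb.
have Hxp := DN1 HpD; have Hxq := DN1 HqD; have Hxr := DN1 HrD; have Hxs := DN1 HsD.
have HrS := subsetP HD r HrD; have HsS := subsetP HD s HsD.
have HpS := subsetP HD p HpD; have HqS := subsetP HD q HqD.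
have k1 := K1 Hs Hi H6 Ha Hb Hab.
have k2 := K2 Hs Hi H6 H7 HA HnA aA bA Ha Hb Hab.
case: (eqVneq r p) => [rp|rp]; case: (eqVneq r q) => [rq|rq];
  case: (eqVneq s p) => [sp|sp]; case: (eqVneq s q) => [sq|sq].
- by move: pq; rewrite -rp rq eqxx.
- by move: pq; rewrite -rp rq eqxx.
- by move: pq; rewrite -rp rq eqxx.
- by move: pq; rewrite -rp rq eqxx.
- by move: rs; rewrite rp sp eqxx.
- by move: rs; rewrite rp sp eqxx.
- by apply: (k2 p q) => //; rewrite -?rp -?sq.
- apply: (k1 q p s) => //; rewrite -?rp //; by rewrite eq_sym.
- by move: pq; rewrite -sp sq eqxx.
- by apply: (k2 p q) => //; rewrite -?sp -?rq.
- by move: rs; rewrite rq sq eqxx.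
- apply: (k1 p q s) => //; rewrite -?rq //; by rewrite eq_sym.
- by move: pq; rewrite -sp sq eqxx.
- apply: (k1 q p r) => //; rewrite -?sp //; by rewrite eq_sym.
- apply: (k1 p q r) => //; rewrite -?sq //; by rewrite eq_sym.
- have nar : ~~ e a r by apply/negP => H; case: (aD r HrD H) => E; subst; rewrite eqxx in rp rq.
  have nas : ~~ e a s by apply/negP => H; case: (aD s HsD H) => E; subst; rewrite eqxx in sp sq.
  have nbp : ~~ e b p by apply/negP => H; case: (bD p HpD H) => E; subst; rewrite eqxx in rp sp.
  have nbq : ~~ e b q by apply/negP => H; case: (bD q HqD H) => E; subst; rewrite eqxx in rq sq.
  case: (boolP (b \in S)) => bS.
  + have aS : a \notin S by apply/negP => aS; move: (Hind a b aS bS); rewrite Hab.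
    have C : cfg e x b a r s p q.
      split=> //; first by rewrite Hs.
      by split=> //; rewrite sq pq.
    exact: (K0 Hs Hi H6 H7 C HS Hind HpS HqS aS nbp nbq).
  + have C : cfg e x a b p q r s.
      split=> //; split=> //; rewrite ?(eq_sym p) ?(eq_sym q) ?rp ?rq ?sp ?sq //.
    exact: (K0 Hs Hi H6 H7 C HS Hind HrS HsS bS nar nas).
Qed.
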